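(* The relation $\preceq_{d+1}$ is a partial order on the set of simplices on $\gamma_d$.
   Context: $\gamma_d=\{(t,t^2,\dots,t^d):t\in\mathbb{R}\}$. A simplex on $\gamma_d$ is a finite subset $\sigma\subseteq\gamma_d$ with $|\sigma|\le d+1$, identified with $\mathrm{conv}(\sigma)$. Simplices overlap in $\mathbb{R}^d$ if $\mathrm{conv}(\sigma)\cap\mathrm{conv}(\tau)\supsetneq\mathrm{conv}(\sigma\cap\tau)$. For $\sigma=\{\gamma_d(t_1),\dots,\gamma_d(t_k)\}$ the lifting is $\hat\sigma=\{\gamma_{d+1}(t_i)\}$ and the height function $h_\sigma:\mathrm{conv}(\sigma)\to\mathbb{R}$ assigns to $p$ the last coordinate of the point of $\mathrm{conv}(\hat\sigma)$ projecting to $p$. Write $\sigma<_{d+1}\tau$ if $\sigma,\tau$ overlap in $\mathbb{R}^d$ and $h_\sigma\le h_\tau$ on $\mathrm{conv}(\sigma)\cap\mathrm{conv}(\tau)$. Define $\sigma\preceq_{d+1}\tau$ if $\sigma=\tau$ or there exist $k\ge1$ and simplices $\sigma=\sigma_0<_{d+1}\sigma_1<_{d+1}\dots<_{d+1}\sigma_k=\tau$ on $\gamma_d$. *)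

(* Defs.v *)
From HB Require Import structures.
From mathcomp Require Import all_boot all_order all_algebra.
From mathcomp Require Import finmap.
From mathcomp Require Import boolp classical_sets reals.
From Stdlib Require Import Relations.

Unset Implicit Arguments.
Unset Strict Implicit.
Unset Printing Implicit Defensive.

Import Order.TTheory GRing.Theory Num.Theory.
Local Open Scope ring_scope.
Local Open Scope classical_set_scope.

Section Defs.
Variable R : realType.

Definition gamma (n : nat) (t : R) : 'rV[R]_n := \row_(i < n) t ^+ i.+1.

(* A simplex on gamma_d is given by its finite set of parameters T
   (sigma = {gamma_d(t) : t in T}); gamma_d is injective for d >= 1. *)
Definition is_simplex (d : nat) (T : {fset R}) : Prop := (#|` T| <= d.+1)%N.

Definition conv_pts (n : nat) (f : R -> 'rV[R]_n) (T : {fset R}) : set 'rV[R]_n :=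
  [set p | exists l : R -> R,
     (forall t, t \in T -> 0 <= l t) /\
     \sum_(t <- T) l t = 1 /\
     p = \sum_(t <- T) l t *: f t].

Definition conv_simplex (d : nat) (T : {fset R}) := conv_pts d (gamma d) T.
Definition conv_lift (d : nat) (T : {fset R}) := conv_pts d.+1 (gamma d.+1) T.

Definition proj_last (d : nat) (q : 'rV[R]_d.+1) : 'rV[R]_d :=
  \row_(i < d) q 0 (widen_ord (leqnSn d) i).
Definition last_coord (d : nat) (q : 'rV[R]_d.+1) : R := q 0 ord_max.

Definition is_height (d : nat) (T : {fset R}) (p : 'rV[R]_d) (y : R) : Prop :=
  exists q : 'rV[R]_d.+1, conv_lift d T q /\ @proj_last d q = p /\ @last_coord d q = y.

Definition overlap (d : nat) (S T : {fset R}) : Prop :=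
  conv_simplex d (S `&` T)%fset `<` (conv_simplex d S `&` conv_simplex d T).

Definition lt_lift (d : nat) (S T : {fset R}) : Prop :=
  overlap d S T /\
  forall p, conv_simplex d S p -> conv_simplex d T p ->
    forall y z, is_height d S p y -> is_height d T p z -> y <= z.

Definition lt_lift_simp (d : nat) (S T : {fset R}) : Prop :=
  is_simplex d S /\ is_simplex d T /\ lt_lift d S T.

Definition prec_lift (d : nat) (S T : {fset R}) : Prop :=
  S = T \/ clos_trans _ (lt_lift_simp d) S T.

End Defs.

(* Main.v *)
Require Import Defs.
From HB Require Import structures.
From mathcomp Require Import all_boot all_order all_algebra.
From mathcomp Require Import finmap.
From mathcomp Require Import boolp classical_sets reals.
From mathcomp Require Import ring lra zify.
From Stdlib Require Import Classical_Prop.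

Set Implicit Arguments.
Unset Strict Implicit.
Unset Printing Implicit Defensive.
Import Order.TTheory GRing.Theory Num.Theory.
Local Open Scope ring_scope.

Section Aux.
Variable R : realType.

Definition gtR (a b : R) := b < a.

Lemma gtR_trans : transitive gtR.
Proof. by move=> a b c; rewrite /gtR => h1 h2; apply: lt_trans h2 h1. Qed.

Lemma gtR_irr : irreflexive gtR.
Proof. by move=> a; rewrite /gtR ltxx. Qed.

Definition sgok (b : bool) (v : R) := if b then 0 < v else v < 0.

Lemma sq_pos (a : R) : a != 0 -> 0 < a * a.
Proof. by move=> h; rewrite lt_def mulf_neq0 // -expr2 sqr_ge0. Qed.

Lemma sg_same e (a b : R) : sgok e a -> sgok e b -> 0 < a * b.
Proof. by case: e => /= ha hb; nra. Qed.

Lemma sg_neg e (b : R) : ~~ sgok e b -> b != 0 -> sgok (~~ e) b.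
Proof.
case: e => /= hb hb0.
  by rewrite lt_def eq_sym hb0 /= leNgt.
by rewrite lt_def hb0 /= leNgt.
Qed.

Lemma sg_opp e (a b : R) : sgok e a -> sgok (~~ e) b -> a * b < 0.
Proof. by case: e => /= ha hb; nra. Qed.

Lemma sg_div e (a b : R) : sgok e a -> 0 < a * b -> sgok e b.
Proof. by case: e => /= ha hb; nra. Qed.

Lemma sum_poly (ps : seq R) (nu : R -> R) (P : {poly R}) n :
  (forall k, (k <= n)%N -> \sum_(y <- ps) nu y * y ^+ k = 0) ->
  (size P <= n.+1)%N -> \sum_(y <- ps) nu y * P.[y] = 0.
Proof.
move=> hk hP.
under eq_bigr do rewrite (horner_coef_wide _ hP) mulr_sumr.
rewrite exchange_big /= big1 // => i _.
under eq_bigr do rewrite mulrCA.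
by rewrite -mulr_sumr hk ?mulr0 // -ltnS.
Qed.

Lemma PL (nu : R -> R) (ps : seq R) : sorted gtR ps ->
  exists ys, exists e : bool, exists P : {poly R},
  [/\ {subset ys <= ps}, sorted gtR ys,
      (forall i, (i < size ys)%N -> sgok (e (+) odd i) (nu (nth 0 ys i))),
      (size P <= size ys)%N &
      (forall y, y \in ps -> nu y != 0 -> 0 < nu y * P.[y])] /\
  (ys = [::] -> forall y, y \in ps -> nu y = 0) /\
  (forall h t, ys = h :: t ->
     (forall y, y \in ps -> nu y != 0 -> y <= h) /\
     (forall z, h <= z -> 0 < nu h * P.[z])).
Proof.
elim: ps => [|x ps IH] /=.
  exists [::], true, 0; split; first by split => //; rewrite size_poly0.
  by split.
rewrite (path_sortedE gtR_trans) => /andP[/allP xall sps].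
have {IH} [ys [e [P [[sub sys sg szP pos] [nil0 inv]]]]] := IH sps.
have [nx0|nxn0] := eqVneq (nu x) 0.
  exists ys, e, P; split; first split => //.
  - by move=> y /sub; rewrite inE orbC => ->.
  - by move=> y; rewrite inE => /orP[/eqP->|/pos//]; rewrite nx0 eqxx.
  split.
    by move=> /nil0 h y; rewrite inE => /orP[/eqP->//|/h].
  move=> h t /inv [h1 h2]; split => // y.
  by rewrite inE => /orP[/eqP->|/h1//]; rewrite nx0 eqxx.
case: ys sub sys sg szP nil0 inv => [|h t] sub sys sg szP nil0 inv.
  exists [:: x], (0 < nu x), (nu x)%:P; split; first split.
  - by move=> y; rewrite inE => /eqP->; rewrite inE eqxx.
  - by [].
  - move=> [|i] //= _; move: nxn0; rewrite /sgok addbF.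
    by case: (ltgtP (nu x) 0) => //; rewrite eqxx.
  - by rewrite size_polyC leq_b1.
  - move=> y; rewrite inE => /orP[/eqP->|/(nil0 erefl)->]; last by rewrite eqxx.
    by rewrite hornerC => _; apply: sq_pos.

  split => // h' t' [<- _]; split.
    by move=> y; rewrite inE => /orP[/eqP->//|/(nil0 erefl)->]; rewrite eqxx.
  by move=> z _; rewrite hornerC; apply: sq_pos.
have sh : sgok e (nu h) by have := sg 0%N erefl; rewrite addbF.
have [inv1 inv2] := inv h t erefl.
have hps : h \in ps := sub h (mem_head _ _).
have hx : h < x := xall h hps.
have [sh' st] : path gtR h t /\ sorted gtR t.
  by split => //; apply: path_sorted sys.
have tall : all (gtR x) t.
  by apply/allP => y yt; apply: xall; apply: sub; rewrite inE yt orbT.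
case: (boolP (sgok e (nu x))) => sx.
  exists (x :: t), e, P; split; first split.
  - move=> y; rewrite inE => /orP[/eqP->|yt]; first by rewrite mem_head.
    by rewrite inE sub ?orbT // inE yt orbT.
  - by rewrite /= (path_sortedE gtR_trans) tall.
  - by move=> [|i] hi //=; rewrite ?addbF //; have := sg i.+1 hi.
  - by [].
  - move=> y; rewrite inE => /orP[/eqP->|/pos//] _.
    have := inv2 x (ltW hx); have := sg_same sh sx; nra.
  split => // h' t' [<- _]; split.
    by move=> y; rewrite inE => /orP[/eqP->//|yps _]; apply/ltW/xall.
  move=> z xz; have := inv2 z (le_trans (ltW hx) xz); have := sg_same sh sx; nra.
have sx' := sg_neg sx nxn0.
set r := (x + h) / 2.
exists [:: x, h & t], (~~ e), (P * (r%:P - 'X)); split; first split.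
- move=> y; rewrite !inE => /or3P[/eqP->|/eqP->|yt]; first by rewrite eqxx.
    by rewrite hps orbT.
  by rewrite sub ?orbT // inE yt orbT.
- by apply/andP; split.
- move=> [|i] hi /=; first by rewrite addbF.
  by rewrite addNb addbN negbK; apply: sg.
- rewrite (leq_trans (size_polyMleq _ _)) //.
  have -> : size (r%:P - 'X) = 2%N.
    by rewrite -opprB size_opp size_XsubC.
  by rewrite addn2 /=; apply: szP.
- move=> y; rewrite inE => /orP[/eqP->|yps] ynz; rewrite hornerM hornerD hornerN hornerC hornerX.
    have hPx := sg_div sh (inv2 x (ltW hx)).
    have := sg_opp hPx sx'; rewrite mulrA [nu x * _]mulrC.
    move: (P.[x] * nu x) => A hA; rewrite /r; nra.
  have := pos y yps ynz; have := inv1 y yps ynz; rewrite /r mulrA.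
  move: (nu y * P.[y]) => A; nra.
split => // h' t' [<- _]; split.
  by move=> y; rewrite inE => /orP[/eqP->//|yps _]; apply/ltW/xall.
move=> z xz; rewrite hornerM hornerD hornerN hornerC hornerX.
have hPz := sg_div sh (inv2 z (le_trans (ltW hx) xz)).
have := sg_opp hPz sx'; rewrite mulrA [nu x * _]mulrC.
move: (P.[z] * nu x) => A hA; rewrite /r; nra.
Qed.

Lemma chain_long (nu : R -> R) (ps : seq R) n : sorted gtR ps ->
  (forall k, (k <= n)%N -> \sum_(y <- ps) nu y * y ^+ k = 0) ->
  (exists2 y, y \in ps & nu y != 0) ->
  exists ys, exists e : bool, [/\ {subset ys <= ps}, sorted gtR ys,
      (forall i, (i < size ys)%N -> sgok (e (+) odd i) (nu (nth 0 ys i))) &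
      (n.+2 <= size ys)%N].
Proof.
move=> sps hk [y0 y0ps ny0].
have [ys [e [P [[sub sys sg szP pos] _]]]] := PL nu sps.
exists ys, e; split => //.
rewrite ltnNge; apply/negP => hsz.
have := sum_poly hk (leq_trans szP hsz).
rewrite (big_rem y0) //=.
have : 0 <= \sum_(y <- rem y0 ps) nu y * P.[y].
  rewrite big_seq; apply: sumr_ge0 => y /mem_rem yps.
  have [->|nz] := eqVneq (nu y) 0; first by rewrite mul0r.
  exact/ltW/pos.
have := pos y0 y0ps ny0; lra.
Qed.

Lemma prod_sign (ys : seq R) i : sorted gtR ys -> (i < size ys)%N ->
  sgok (~~ odd i) (\prod_(z <- ys | z != nth 0 ys i) (nth 0 ys i - z)).
Proof.
elim: ys i => [|a t IH] [|i] //=; rewrite (path_sortedE gtR_trans) => /andP[/allP ta st] hi.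
  rewrite big_cons eqxx big_seq_cond; apply: prodr_gt0 => z /andP[zt _].
  by rewrite subr_gt0; apply: ta.
have yt : nth 0 t i \in t := mem_nth 0 hi.
have ya : nth 0 t i < a := ta _ yt.
rewrite big_cons gt_eqF //.
have := IH i st hi; rewrite /sgok; case: (odd i) => /= h; nra.
Qed.

Definition Lw (ys : seq R) (y : R) : R :=
  if y \in ys then (\prod_(z <- ys | z != y) (y - z))^-1 else 0.
Definition Lp (ys : seq R) (y : R) : {poly R} := \prod_(z <- ys | z != y) ('X - z%:P).

Lemma Lp_size ys y : uniq ys -> y \in ys -> size (Lp ys y) = size ys.
Proof.
move=> u yin; rewrite /Lp -big_filter size_prod_XsubC size_filter.
have := count_predC (pred1 y) ys; rewrite count_uniq_mem // yin.
have : (0 < size ys)%N by case: ys yin u.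
move=> h1 h2; rewrite -h2 add1n; congr (_.+1); apply: eq_count => z /=; by [].
Qed.

Lemma Lp_monic ys y : Lp ys y \is monic.
Proof. exact: monic_prod_XsubC. Qed.

Lemma Lp_eval ys y y' : y' \in ys -> y' != y -> (Lp ys y).[y'] = 0.
Proof.
move=> yin yne; rewrite /Lp horner_prod (big_rem y') //= yne hornerXsubC subrr.
by rewrite mul0r.
Qed.

Lemma Lp_self ys y : (Lp ys y).[y] = \prod_(z <- ys | z != y) (y - z).
Proof. by rewrite /Lp horner_prod; apply: eq_bigr => z _; rewrite hornerXsubC. Qed.

Lemma prod_nz (ys : seq R) y : \prod_(z <- ys | z != y) (y - z) != 0.
Proof.
rewrite prodf_seq_neq0; apply/allP => z _ /=; apply/implyP => zy.
by rewrite subr_eq0 eq_sym.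
Qed.

Lemma lagrange (ys : seq R) (P : {poly R}) : uniq ys -> (size P <= size ys)%N ->
  P = \sum_(y <- ys) (P.[y] * Lw ys y) *: Lp ys y.
Proof.
move=> u hs; apply/eqP; rewrite -subr_eq0; apply/eqP.
apply: (@roots_geq_poly_eq0 _ _ ys) => //.
- apply/allP => y' yin; rewrite /root hornerD hornerN horner_sum.
  rewrite (bigD1_seq y') //= big1 ?addr0.
    by rewrite hornerZ Lp_self /Lw yin -mulrA mulVf ?prod_nz // mulr1 subrr.
  by move=> y yne; rewrite hornerZ Lp_eval ?mulr0 // eq_sym.
- rewrite (leq_trans (size_polyD _ _)) // geq_max hs size_polyN /=.
  rewrite big_seq; apply: (big_ind (fun p : {poly R} => size p <= size ys)%N).
  + by rewrite size_poly0.
  + by move=> p q hp hq; rewrite (leq_trans (size_polyD _ _)) // geq_max hp hq.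
  + move=> y yin; rewrite (leq_trans (size_scale_leq _ _)) //.
    by rewrite Lp_size.
Qed.

Lemma moment (ys : seq R) n k : uniq ys -> size ys = n.+2 -> (k <= n.+1)%N ->
  \sum_(y <- ys) Lw ys y * y ^+ k = (k == n.+1)%:R.
Proof.
move=> u hs hk.
have hP : (size ('X^k : {poly R}) <= size ys)%N by rewrite size_polyXn hs.
have := congr1 (fun p : {poly R} => p`_n.+1) (lagrange u hP).
rewrite /= coefXn coef_sum eq_sym => ->.
rewrite !big_seq; apply: eq_bigr => y yin.
rewrite coefZ.
have := monicP (Lp_monic ys y); rewrite /lead_coef Lp_size // hs /= => ->.
by rewrite hornerXn mulr1 mulrC.
Qed.

Lemma circuit (ys : seq R) n : sorted gtR ys -> size ys = n.+2 ->
  [/\ (forall y, y \notin ys -> Lw ys y = 0),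
      (forall i, (i < n.+2)%N -> sgok (~~ odd i) (Lw ys (nth 0 ys i))),
      (forall k, (k <= n)%N -> \sum_(y <- ys) Lw ys y * y ^+ k = 0) &
      0 < \sum_(y <- ys) Lw ys y * y ^+ n.+1].
Proof.
move=> sys hs; have u := sorted_uniq gtR_trans gtR_irr sys.
split.
- by move=> y yn; rewrite /Lw (negbTE yn).
- move=> i hi; rewrite -hs in hi; have := prod_sign sys hi.
  rewrite /Lw mem_nth //; case: (odd i) => /= h.
    by rewrite invr_lt0.
  by rewrite invr_gt0.
- move=> k hk; rewrite (moment u hs) ?(leq_trans hk) //.
  by have -> : (k == n.+1) = false by apply/negbTE; rewrite neq_ltn ltnS hk.
- by rewrite (moment u hs) // eqxx ltr01.
Qed.

Lemma le_sum_term (U : seq R) (f : R -> R) y : y \in U ->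
  (forall z, z \in U -> 0 <= f z) -> f y <= \sum_(z <- U) f z.
Proof.
move=> yU h; rewrite (big_rem y) //=.
have : 0 <= \sum_(z <- rem y U) f z.
  by rewrite big_seq; apply: sumr_ge0 => z /mem_rem /h.
lra.
Qed.

Lemma sum_indM (U S : {fset R}) (g h : R -> R) : (S `<=` U)%fset ->
  \sum_(y <- U) (if y \in S then g y else 0) * h y = \sum_(y <- S) g y * h y.
Proof.
move=> sub; rewrite -(big_fset_incl _ sub).
  by apply: eq_big_seq => y yS; rewrite yS.
by move=> y _ yn; rewrite (negbTE yn) mul0r.
Qed.

Lemma conv_coord n (T : {fset R}) (l : R -> R) (i : 'I_1) (j : 'I_n) :
  (\sum_(t <- T) l t *: gamma R n t) i j = \sum_(t <- T) l t * t ^+ j.+1.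
Proof. by rewrite summxE; apply: eq_bigr => t _; rewrite !mxE. Qed.


Lemma overlap_nu d (S T : {fset R}) : overlap R d S T -> exists nu : R -> R,
  [/\ (forall y, y \in (S `|` T)%fset -> 0 < nu y -> y \in S),
      (forall y, y \in (S `|` T)%fset -> nu y < 0 -> y \in T),
      (forall k, (k <= d)%N -> \sum_(y <- (S `|` T)%fset) nu y * y ^+ k = 0) &
      exists2 y, y \in (S `|` T)%fset & nu y != 0].
Proof.
case=> _ nsub.
have [p [[hS hT] np]] : exists p, (conv_simplex R d S p /\ conv_simplex R d T p) /\
    ~ conv_simplex R d (S `&` T)%fset p.
  apply: NNPP => hn; apply: nsub => p [hS hT]; apply: NNPP => hp; apply: hn.
  by exists p.
case: hS => l1 [l1p [l1s l1e]]; case: hT => l2 [l2p [l2s l2e]].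
pose nu y := (if y \in S then l1 y else 0) - (if y \in T then l2 y else 0).
exists nu; split.
- move=> y _; rewrite /nu; case yS: (y \in S) => //; case yT: (y \in T).
    by have := l2p y yT; lra.
  by rewrite subrr ltxx.
- move=> y _; rewrite /nu; case yT: (y \in T) => //; case yS: (y \in S).
    by have := l1p y yS; lra.
  by rewrite subrr ltxx.
- move=> k hk; rewrite /nu.
  under eq_bigr do rewrite mulrBl.
  rewrite sumrB !sum_indM ?fsubsetUl ?fsubsetUr //.
  case: k hk => [|i] hi.
    under eq_bigr do rewrite expr0 mulr1.
    under [X in _ - X]eq_bigr do rewrite expr0 mulr1.
    by rewrite l1s l2s subrr.
  have := congr1 (fun M : 'rV[R]_d => M 0 (Ordinal hi)) l1e.
  have := congr1 (fun M : 'rV[R]_d => M 0 (Ordinal hi)) l2e.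
  by rewrite /= !conv_coord => <- <-; rewrite subrr.
apply: NNPP => hz.
have z y : y \in (S `|` T)%fset -> nu y = 0.
  move=> yU; apply/eqP; apply: NNPP => hne; apply: hz; exists y => //.
  exact/negP.
have l10 y : y \in S -> y \notin (S `&` T)%fset -> l1 y = 0.
  move=> yS; rewrite in_fsetI yS /= => yT.
  have := z y; rewrite in_fsetU yS /nu yS (negbTE yT) subr0; exact.
apply: np; exists l1; split.
  by move=> t; rewrite in_fsetI => /andP[tS _]; apply: l1p.
split.
  by rewrite (big_fset_incl _ (fsubsetIl S T)).
rewrite l1e (big_fset_incl _ (fsubsetIl S T)) // => y yS yn.
by rewrite l10 // scale0r.
Qed.


Lemma realize d (S T : {fset R}) (w : R -> R) :
  (forall y, y \in (S `|` T)%fset -> 0 < w y -> y \in S) ->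
  (forall y, y \in (S `|` T)%fset -> w y < 0 -> y \in T) ->
  (forall k, (k <= d)%N -> \sum_(y <- (S `|` T)%fset) w y * y ^+ k = 0) ->
  0 < \sum_(y <- (S `|` T)%fset) w y * y ^+ d.+1 -> ~ lt_lift R d S T.
Proof.
set U := (S `|` T)%fset.
move=> hS hT hk hc [_ hlt].
pose a y := if 0 < w y then w y else 0.
pose b y := if w y < 0 then - w y else 0.
have wab y : w y = a y - b y.
  by rewrite /a /b; case: (ltgtP (w y) 0) => // h; rewrite ?subr0 ?sub0r ?opprK.
have a0 y : 0 <= a y by rewrite /a; case: ifP => // /ltW.
have b0 y : 0 <= b y by rewrite /b; case: ifP => // h; rewrite oppr_ge0 ltW.
have aS y : y \in U -> y \notin S -> a y = 0.
  move=> yU yS; rewrite /a; case: ifP => // h.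
  by rewrite (hS y yU h) in yS.
have bT y : y \in U -> y \notin T -> b y = 0.
  move=> yU yT; rewrite /b; case: ifP => // h.
  by rewrite (hT y yU h) in yT.
have sab (G : R -> R) : \sum_(y <- U) w y * G y =
    \sum_(y <- U) a y * G y - \sum_(y <- U) b y * G y.
  by rewrite -sumrB; apply: eq_bigr => y _; rewrite wab mulrBl.
pose s := \sum_(y <- U) a y.
have E1 : \sum_(y <- U) a y * y ^+ 0 = s by apply: eq_bigr => y _; rewrite expr0 mulr1.
have E2 : \sum_(y <- U) b y * y ^+ 0 = \sum_(y <- U) b y.
  by apply: eq_bigr => y _; rewrite expr0 mulr1.
have sb : \sum_(y <- U) b y = s.
  by have := hk 0%N isT; rewrite sab E1 E2 => /eqP; rewrite subr_eq0 => /eqP.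
have spos : 0 < s.
  rewrite lt_def sumr_ge0 // andbT; apply/negP => /eqP s0.
  have az y : y \in U -> a y = 0.
    move=> yU; apply: le_anti; rewrite a0 andbT -s0; apply: le_sum_term => //.
  have bz y : y \in U -> b y = 0.
    move=> yU; apply: le_anti; rewrite b0 andbT -s0 -sb; apply: le_sum_term => //.
  move: hc; rewrite big_seq big1 ?ltxx // => y yU.
  by rewrite wab az ?bz // subrr mul0r.
have sn0 : s != 0 by rewrite gt_eqF.
pose l1 y := a y / s.
pose l2 y := b y / s.
have H1 (G : R -> R) : \sum_(y <- S) l1 y * G y = (\sum_(y <- U) a y * G y) / s.
  rewrite (big_fset_incl _ (fsubsetUl S T)); last first.
    by move=> y yU yS; rewrite /l1 aS // !mul0r.
  by rewrite mulr_suml; apply: eq_bigr => y _; rewrite /l1 mulrAC.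
have H2 (G : R -> R) : \sum_(y <- T) l2 y * G y = (\sum_(y <- U) b y * G y) / s.
  rewrite (big_fset_incl _ (fsubsetUr S T)); last first.
    by move=> y yU yT; rewrite /l2 bT // !mul0r.
  by rewrite mulr_suml; apply: eq_bigr => y _; rewrite /l2 mulrAC.
have C1 n (f : R -> 'rV[R]_n) : conv_pts R n f S (\sum_(t <- S) l1 t *: f t).
  exists l1; split; first by move=> t _; rewrite /l1 divr_ge0 // ltW.
  split => //; transitivity (\sum_(t <- S) l1 t * 1).
    by apply: eq_bigr => t _; rewrite mulr1.
  rewrite (H1 (fun _ => 1)).
  by under eq_bigr do rewrite mulr1; rewrite divff.
have C2 n (f : R -> 'rV[R]_n) : conv_pts R n f T (\sum_(t <- T) l2 t *: f t).
  exists l2; split; first by move=> t _; rewrite /l2 divr_ge0 // ltW.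
  split => //; transitivity (\sum_(t <- T) l2 t * 1).
    by apply: eq_bigr => t _; rewrite mulr1.
  rewrite (H2 (fun _ => 1)).
  by under eq_bigr do rewrite mulr1; rewrite sb divff.
pose p := \sum_(t <- S) l1 t *: gamma R d t.
have cS : conv_simplex R d S p by apply: C1.
have eqp : p = \sum_(t <- T) l2 t *: gamma R d t.
  apply/matrixP => i j; rewrite !conv_coord (H1 (fun t => t ^+ j.+1)).
  rewrite (H2 (fun t => t ^+ j.+1)); congr (_ / s); apply/eqP.
  by rewrite -subr_eq0 -sab; apply/eqP; apply: hk; apply: ltn_ord.
have cT : conv_simplex R d T p by rewrite eqp; apply: C2.
pose Y := (\sum_(y <- U) a y * y ^+ d.+1) / s.
pose Z := (\sum_(y <- U) b y * y ^+ d.+1) / s.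
have hY : is_height R d S p Y.
  exists (\sum_(t <- S) l1 t *: gamma R d.+1 t); split; first exact: C1.
  split.
    by apply/matrixP => i j; rewrite /proj_last mxE !conv_coord.
  by rewrite /last_coord conv_coord (H1 (fun t => t ^+ d.+1)).
have hZ : is_height R d T p Z.
  exists (\sum_(t <- T) l2 t *: gamma R d.+1 t); split; first exact: C2.
  split.
    by rewrite eqp; apply/matrixP => i j; rewrite /proj_last mxE !conv_coord.
  by rewrite /last_coord conv_coord (H2 (fun t => t ^+ d.+1)).
have := hlt p cS cT Y Z hY hZ.
rewrite /Y /Z ler_pM2r ?invr_gt0 // => hle.
move: hc; rewrite sab; lra.
Qed.


Lemma sum_sub (U : {fset R}) (ys : seq R) (f : R -> R) : uniq ys ->
  {subset ys <= U} -> (forall y, y \notin ys -> f y = 0) ->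
  \sum_(y <- U) f y = \sum_(y <- ys) f y.
Proof.
move=> u sub f0.
rewrite (bigID (fun y => y \in ys)) /= [X in _ + X]big1 ?addr0; last first.
  by move=> y /f0.
rewrite -big_filter; apply: perm_big; apply: uniq_perm => //.
  by rewrite filter_uniq // fset_uniq.
move=> y; rewrite mem_filter; apply/idP/idP => [/andP[]//|h].
by rewrite h sub.
Qed.

Lemma seq_max (s : seq R) y0 : y0 \in s ->
  exists2 x, x \in s & forall y, y \in s -> y <= x.
Proof.
elim: s y0 => [//|a s IH] y0 _.
case: s IH => [|b s] IH.
  by exists a; rewrite ?mem_head // => y; rewrite inE => /eqP->.
have [x xs hx] := IH b (mem_head _ _).
case: (leP a x) => ax.
  exists x; first by rewrite inE xs orbT.
  by move=> y; rewrite inE => /orP[/eqP->//|/hx].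
exists a; first exact: mem_head.
move=> y; rewrite inE => /orP[/eqP->//|/hx yx]; exact: (le_trans yx (ltW ax)).
Qed.

Definition cnt (S : {fset R}) (y : R) : nat := #|` [fset s in S | y < s]|%fset.
Definition Fs (S : {fset R}) (y : R) : R :=
  if y \in S then (if odd (cnt S y) then -1 else 1) else 0.
Definition lexlt (S T : {fset R}) :=
  exists x, Fs S x < Fs T x /\ forall y, x < y -> Fs S y = Fs T y.

Lemma lexlt_trans S T V : lexlt S T -> lexlt T V -> lexlt S V.
Proof.
move=> [x1 [h1 e1]] [x2 [h2 e2]].
case: (ltgtP x1 x2) => hx.
- exists x2; split; first by rewrite e1.
  by move=> y xy; rewrite e1 ?e2 // (lt_trans hx xy).
- exists x1; split; first by rewrite -e2.
  by move=> y xy; rewrite e1 ?e2 // (lt_trans hx xy).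
- subst x2; exists x1; split; first exact: lt_trans h1 h2.
  by move=> y xy; rewrite e1 ?e2.
Qed.

Lemma lexlt_irr S : ~ lexlt S S.
Proof. by move=> [x [h _]]; rewrite ltxx in h. Qed.

Lemma sorted_join (A D : seq R) x : sorted gtR A -> sorted gtR D ->
  (forall a, a \in A -> x < a) -> (forall y, y \in D -> y < x) ->
  sorted gtR (A ++ x :: D).
Proof.
move=> sA sD hA hD; elim: A sA hA => [|a A IH] sA hA /=.
  by rewrite (path_sortedE gtR_trans) sD andbT; apply/allP => y /hD.
move: sA; rewrite /= !(path_sortedE gtR_trans) => /andP[/allP aA sA].
rewrite IH ?andbT //; last by move=> b bA; apply: hA; rewrite inE bA orbT.
have xa : x < a by apply: hA; exact: mem_head.
apply/allP => y; rewrite mem_cat inE => /or3P[/aA//|/eqP->//|/hD yx].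
exact: lt_trans yx xa.
Qed.

Lemma find_drop (C : seq R) x : sorted gtR C ->
  forall y, y \in drop (find (fun c => c < x) C) C -> y < x.
Proof.
elim: C => [//|c C IH] /=; rewrite (path_sortedE gtR_trans) => /andP[/allP cC sC] y.
case: ifP => [cx|_]; last by rewrite /= => /IH; apply.
rewrite drop0 inE => /orP[/eqP->//|/cC yc]; exact: lt_trans yc cx.
Qed.

Lemma find_take (C : seq R) x :
  forall y, y \in take (find (fun c => c < x) C) C -> x <= y.
Proof.
elim: C => [//|c C IH] /= y.
case: ifP => [//|cx]; rewrite inE => /orP[/eqP->|/IH//].
by rewrite leNgt cx.
Qed.

Lemma sortU_sorted (U : {fset R}) : sorted gtR (rev (sort <=%R U)).
Proof.
rewrite rev_sorted.
have : sorted <%R (sort <=%R U).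
  by rewrite lt_sorted_uniq_le sort_uniq fset_uniq sort_sorted //; apply: le_total.
by [].
Qed.


Lemma bad d (S T : {fset R}) x :
  lt_lift R d S T ->
  x \in ((S `\` T) `|` (T `\` S))%fset ->
  (forall y, y \in ((S `\` T) `|` (T `\` S))%fset -> y <= x) ->
  (x \in S) = ~~ odd (cnt S x) -> False.
Proof.
move=> hL xD hmax hbad.
pose U := (S `|` T)%fset.
have xST : (x \in S) = (x \notin T).
  by move: xD; rewrite !inE; case: (x \in S); case: (x \in T).
have above y : x < y -> (y \in S) = (y \in T).
  move=> xy; case yS: (y \in S); case yT: (y \in T) => //.
    by have := hmax y; rewrite !inE yS yT /= => /(_ isT); rewrite leNgt xy.
  by have := hmax y; rewrite !inE yS yT /= => /(_ isT); rewrite leNgt xy.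
have [nu [nS nT nk nz]] := overlap_nu (proj1 hL).
pose ps := rev (sort <=%R U).
have sps : sorted gtR ps := sortU_sorted U.
have memps y : (y \in ps) = (y \in U) by rewrite mem_rev mem_sort.
have sumps (f : R -> R) : \sum_(y <- ps) f y = \sum_(y <- U) f y.
  by apply: perm_big; rewrite perm_rev perm_sort.
have [C [e [subC sC sgC szC]]] : exists ys, exists e : bool, [/\ {subset ys <= ps}, sorted gtR ys,
      (forall i, (i < size ys)%N -> sgok (e (+) odd i) (nu (nth 0 ys i))) &
      (d.+2 <= size ys)%N].
  apply: chain_long sps _ _.
    by move=> k hk; rewrite sumps; apply: nk.
  by case: nz => y yU ny; exists y; rewrite ?memps.
have CU y : y \in C -> y \in U by move/subC; rewrite memps.
have admC i : (i < size C)%N ->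
    if e (+) odd i then nth 0 C i \in S else nth 0 C i \in T.
  move=> hi; have := sgC i hi; have hU := CU _ (mem_nth 0 hi).
  by rewrite /sgok; case: ifP => _ h; [apply: nS | apply: nT].
pose k := cnt S x.
pose Afs := [fset s in S | x < s]%fset.
pose A := rev (sort <=%R Afs).
have sA : sorted gtR A := sortU_sorted Afs.
have szA : size A = k by rewrite size_rev size_sort.
have memA y : (y \in A) = (y \in S) && (x < y) by rewrite mem_rev mem_sort !inE.
pose m0 := find (fun c => c < x) C.
have hm0 : (m0 <= size C)%N := find_size _ _.
pose m := if e (+) odd m0 == ~~ (x \in S) then m0 else m0.+1.
have em : e (+) odd m = ~~ (x \in S).
  rewrite /m; case: eqP => // /eqP h /=.
  by rewrite addbN; move: h; case: (e (+) odd m0); case: (x \in S).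
have mm0 : (m0 <= m)%N by rewrite /m; case: ifP.
pose D := drop m C.
have Dlt y : y \in D -> y < x.
  have DE : D = drop (m - m0) (drop m0 C) by rewrite drop_drop subnK.
  move=> yD; apply: (find_drop sC); rewrite DE in yD.
  exact: mem_drop yD.
pose N := A ++ x :: D.
have sN : sorted gtR N.
  apply: (sorted_join sA (subseq_sorted gtR_trans (drop_subseq C m) sC) _ Dlt).
  by move=> a; rewrite memA => /andP[].
have admN i : (i < size N)%N ->
    if ~~ odd i then nth 0 N i \in S else nth 0 N i \in T.
  move=> hi; rewrite /N nth_cat szA.
  case: (ltnP i k) => ik.
    have : nth 0 A i \in A by apply: mem_nth; rewrite szA.
    by rewrite memA => /andP[aS xa]; case: ifP; rewrite // -(above _ xa).
  case eq: (i - k)%N => [|j] /=.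
    have -> : i = k by lia.
    rewrite -hbad; case: ifP => // /negbT.
    by rewrite xST negbK.
  have hi' : (m + j < size C)%N.
    by move: hi; rewrite size_cat /= szA size_drop; lia.
  have := admC _ hi'; rewrite nth_drop oddD addbA em hbad.
  have -> : i = (k + j.+1)%N by lia.
  by rewrite oddD /=; case: (odd k); case: (odd j).
have uC : uniq C := sorted_uniq gtR_trans gtR_irr sC.
have szN : (size C <= size N)%N.
  pose H := take m0 C.
  have szH : size H = m0 by rewrite size_takel.
  have Hge y : y \in H -> x <= y by move=> yH; apply: find_take yH.
  have h1 : (size (filter (predC1 x) H) <= k)%N.
    rewrite -szA; apply: uniq_leq_size; first by rewrite filter_uniq // take_uniq.
    move=> y; rewrite mem_filter /= => /andP[yx yH].
    have xy : x < y by rewrite lt_def yx Hge.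
    rewrite memA xy andbT.
    by have := CU y (mem_take yH); rewrite inE -(above _ xy) orbb.
  have h2 : size H = (size (filter (predC1 x) H) + (x \in H))%N.
    rewrite size_filter -(count_predC (pred1 x) H) count_uniq_mem ?take_uniq //.
    by rewrite addnC; congr (_ + _)%N; apply: eq_count => y.
  have h3 : x \in H -> m = m0.
    move=> xH.
    have xC : x \in C := mem_take xH.
    pose j := index x C.
    have jC : (j < size C)%N by rewrite index_mem.
    have nj : nth 0 C j = x := nth_index 0 xC.
    have jm : (j < m0)%N.
      rewrite ltnNge; apply/negP => hj.
      have : nth 0 C j \in drop m0 C.
        rewrite -[j](subnKC hj) -nth_drop; apply: mem_nth; rewrite size_drop; move: jC hj; move: (j) (m0) (size C) => a b c; lia.
      by move/(find_drop sC); rewrite nj ltxx.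
    have jm1 : j.+1 = m0.
      apply/eqP; rewrite eqn_leq jm /= leqNgt; apply/negP => hj.
      have : nth 0 C j.+1 \in H by rewrite /H -(nth_take 0 hj); apply: mem_nth; rewrite szH.
      move/Hge; rewrite leNgt -{1}nj.
      have -> // : nth 0 C j.+1 < nth 0 C j.
      apply: (sorted_ltn_nth gtR_trans 0 sC) => //; rewrite inE; exact: (leq_trans hj hm0).
    have := admC j jC; rewrite nj => hs.
    have ej : e (+) odd j = (x \in S).
      by move: hs; case: ifP => _ h; rewrite ?h // xST h.
    by rewrite /m -jm1 /= addbN ej eqxx.
  rewrite /N size_cat /= szA /D size_drop.
  have : (m <= m0.+1)%N by rewrite /m; case: ifP.
  move: h1 h2 h3 szH; case: (x \in H) => /= h1 h2 h3 szH.
    by have := h3 erefl; lia.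
  lia.
pose N' := take d.+2 N.
have N'size : size N' = d.+2 by rewrite size_takel // (leq_trans szC szN).
have sN' : sorted gtR N' := subseq_sorted gtR_trans (take_subseq N d.+2) sN.
have [wz wsg wk wc] := circuit sN' N'size.
have uN' := sorted_uniq gtR_trans gtR_irr sN'.
have N'U : {subset N' <= U}.
  move=> y /mem_take; rewrite /N mem_cat inE => /or3P[|/eqP->|/mem_drop/CU//].
    by rewrite memA inE => /andP[-> _].
  by rewrite inE; move: xST; case: (x \in S); case: (x \in T).
have wadm y : y \in U -> Lw N' y != 0 ->
    if ~~ odd (index y N') then (y \in S) && (0 < Lw N' y) else (y \in T) && (Lw N' y < 0).
  move=> yU wn.
  have yN : y \in N' by apply: contraNT wn => /wz ->.
  have hi : (index y N' < d.+2)%N by rewrite -N'size index_mem.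
  have hi' : (index y N' < size N)%N by apply: (leq_trans hi); rewrite (leq_trans szC szN).
  have := wsg _ hi; have := admN _ hi'.
  rewrite -(nth_take 0 hi) -/N' nth_index //.
  by case: (odd (index y N')) => /= -> ->.
apply: (realize (w := Lw N')) hL.
- move=> y yU wp; have := wadm y yU (negbT (gt_eqF wp)); case: ifP => _ /andP[] //.
  by move=> _ h; have := lt_trans h wp; rewrite ltxx.
- move=> y yU wp; have := wadm y yU (negbT (lt_eqF wp)); case: ifP => _ /andP[] //.
  by move=> _ h; have := lt_trans wp h; rewrite ltxx.
- move=> k' hk; rewrite (sum_sub (ys := N')) //; first exact: wk.
  by move=> y /wz ->; rewrite mul0r.
rewrite (sum_sub (ys := N')) //.
by move=> y /wz ->; rewrite mul0r.
Qed.


Lemma main d (S T : {fset R}) : lt_lift R d S T -> lexlt S T.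
Proof.
move=> hL.
have ST : S != T.
  apply/eqP => E; subst T; case: hL => [[_ nsub] _]; apply: nsub => p [h _].
  by rewrite fsetIid.
have [y0 y0D] : exists y, y \in ((S `\` T) `|` (T `\` S))%fset.
  apply: NNPP => hn; apply: (negP ST); apply/eqP/fsetP => y.
  case yS: (y \in S); case yT: (y \in T) => //; exfalso; apply: hn; exists y;
    by rewrite !inE yS yT.
have [x xD hmax] := seq_max y0D.
have xST : (x \in S) = (x \notin T).
  by move: xD; rewrite !inE; case: (x \in S); case: (x \in T).
have above y : x < y -> (y \in S) = (y \in T).
  move=> xy; case yS: (y \in S); case yT: (y \in T) => //.
    by have := hmax y; rewrite !inE yS yT /= => /(_ isT); rewrite leNgt xy.
  by have := hmax y; rewrite !inE yS yT /= => /(_ isT); rewrite leNgt xy.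
have cntE y : x <= y -> cnt S y = cnt T y.
  move=> xy; rewrite /cnt.
  have -> : [fset s in S | y < s]%fset = [fset s in T | y < s]%fset.
    apply/fsetP => s; rewrite !inE; case: (ltP y s) => ys; rewrite ?andbT ?andbF //.
    by rewrite above // (le_lt_trans xy ys).
  by [].
exists x; split; last first.
  by move=> y xy; rewrite /Fs above // cntE // ltW.
have hb := @bad d S T x hL xD hmax.
rewrite /Fs; case xS: (x \in S).
  have -> : (x \in T) = false by move: xST; rewrite xS; case: (x \in T).
  case hk: (odd (cnt S x)); first by rewrite ltrN10.
  by exfalso; apply: hb; rewrite xS hk.
have -> : (x \in T) = true by move: xST; rewrite xS; case: (x \in T).
rewrite -(cntE x (lexx x)); case hk: (odd (cnt S x)); last by rewrite ltr01.
by exfalso; apply: hb; rewrite xS hk.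
Qed.

End Aux.

From Stdlib Require Import Relations.

Lemma clos_lex (R : realType) d (S T : {fset R}) :
  clos_trans _ (lt_lift_simp R d) S T -> lexlt S T.
Proof.
elim => [x y [_ [_ h]]|x y z _ h1 _ h2]; first exact: main h.
exact: lexlt_trans h1 h2.
Qed.

Theorem lemma2p7 (R : realType) (d : nat) (hd : (0 < d)%N) :
  (forall S : {fset R}, is_simplex R d S -> prec_lift R d S S) /\
  (forall S T : {fset R}, is_simplex R d S -> is_simplex R d T ->
     prec_lift R d S T -> prec_lift R d T S -> S = T) /\
  (forall S T U : {fset R}, is_simplex R d S -> is_simplex R d T -> is_simplex R d U ->
     prec_lift R d S T -> prec_lift R d T U -> prec_lift R d S U).
Proof.
split; first by move=> S _; left.
split.
  move=> S T _ _ [->//|h1] [->//|h2].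
  by have := clos_lex (t_trans _ _ _ _ _ h1 h2) => /lexlt_irr.
move=> S T U _ _ _ [->//|h1] [<-|h2]; first by right.
by right; apply: t_trans h1 h2.
Qed.
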